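(* Let $p$ be a prime, $n$ a positive integer, $S\subseteq S_n$ containing the identity and $G$ the subgroup generated by $S$. Suppose $x_0,x_1,\dots,x_{n-1}$ is a basis of $\mathbb{Z}_p^n$ such that for every $j\in\{0,\dots,n-1\}$ and every $g\in G$, the vector $x_j-g\cdot x_j$ lies in the span of $x_0,\dots,x_{j-1}$ (the zero space when $j=0$). For $i\in\{1,\dots,p^n-1\}$ let $y_i=x_{v_p(i)}$, where $v_p$ is the $p$-adic valuation. Then $y_1,\dots,y_{p^n-1}$ is a winning sequence of moves in the $(S,p)$-game.
   Context: For $g\in S_n$ and $x\in\mathbb{Z}_p^n$, $g\cdot x$ is the vector $x'$ with $x'_{g(i)}=x_i$. The $(S,m)$-game: $n$ counters at positions $1,\dots,n$, each showing an element of $\mathbb{Z}_m$; a configuration is a vector in $\mathbb{Z}_m^n$, initially arbitrary and unknown. Each turn the player chooses a move $y\in\mathbb{Z}_m^n$ added coordinatewise, then an adversarially chosen $\sigma\in S$ is applied, replacing $x$ by $\sigma\cdot x$. The player wins if at some moment (including initially) all counters show $0$. A finite sequence of moves is winning if it forces the zero configuration at some time for every initial configuration and every choice of permutations. *)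

(* Defs.v *)
From HB Require Import structures.
From mathcomp Require Import all_boot all_order all_fingroup all_algebra.
Set Implicit Arguments. Unset Strict Implicit. Unset Printing Implicit Defensive.
Import GRing.Theory.
Local Open Scope ring_scope.

(* g . x : the vector x' with x'_{g i} = x_i, i.e. x'_j = x_{g^-1 j}. *)
Definition pact (R : Type) (n : nat) (g : {perm 'I_n}) (x : 'rV[R]_n) : 'rV[R]_n :=
  \row_j x 0 ((g^-1)%g j).

(* Configuration after t turns: initial configuration c0, moves ys (turn t
   uses ys`_t), adversarial permutations sig t applied after move t. *)
Fixpoint config (R : nzRingType) (n : nat) (ys : seq 'rV[R]_n)
    (sig : nat -> {perm 'I_n}) (c0 : 'rV[R]_n) (t : nat) : 'rV[R]_n :=
  match t with
  | 0 => c0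
  | t'.+1 => pact (sig t') (config ys sig c0 t' + nth 0 ys t')
  end.

Definition winning (R : nzRingType) (n : nat) (S : {set {perm 'I_n}})
    (ys : seq 'rV[R]_n) : Prop :=
  forall (c0 : 'rV[R]_n) (sig : nat -> {perm 'I_n}),
    (forall t, (t < size ys)%N -> sig t \in S) ->
    exists2 t, (t <= size ys)%N & config ys sig c0 t = 0.

Definition xseq (V : Type) (n : nat) (x : 'I_n -> V) : seq V := [seq x j | j <- enum 'I_n].

Definition xspan_below (K : fieldType) (n : nat) (x : 'I_n -> 'rV[K]_n) (j : nat)
  : {vspace 'rV[K]_n} := <<[seq x k | k <- enum 'I_n & (val k < j)%N]>>%VS.

Definition yseq (K : fieldType) (p n : nat) (x : 'I_n -> 'rV[K]_n) : seq 'rV[K]_n :=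
  [seq nth 0 (xseq x) (logn p i) | i <- iota 1 (p ^ n).-1].

(* Main.v *)
Require Import Defs.
From HB Require Import structures.
From mathcomp Require Import all_boot all_order all_fingroup all_algebra.
From mathcomp Require Import zify.
Import GRing.Theory.
Local Open Scope ring_scope.

Lemma core (K : fieldType) (m p N : nat) (W : nat -> {vspace 'rV[K]_m})
  (e : nat -> 'rV[K]_m) (c y : nat -> 'rV[K]_m) (M : nat -> 'M[K]_m)
  (pr_p : prime p)
  (W0 : forall v, v \in W 0%N -> v = 0)
  (Wsplit : forall j v, v \in W j.+1 -> exists a, v - a *: e j \in W j)
  (Wact : forall t j v, (t.+1 < N)%N -> v \in W j -> v *m M t \in W j)
  (Wacte : forall t j, (t.+1 < N)%N -> e j *m M t - e j \in W j)
  (ein : forall k j, (k < j)%N -> e k \in W j)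
  (ydef : forall t, (t.+1 < N)%N -> y t = e (logn p t.+1))
  (cdef : forall t, (t.+1 < N)%N -> c t.+1 = (c t + y t) *m M t)
  (chr : forall a : K, exists2 k, (k < p)%N & a + k%:R = 0) :
  forall j s, (p ^ j %| s)%N -> (s + p ^ j <= N)%N -> c s \in W j ->
    exists2 t, (s <= t < s + p ^ j)%N & c t = 0.
Proof.
have p_gt0 : (0 < p)%N by exact: prime_gt0.
have step : forall t j b, (t.+1 < N)%N -> c t + y t - b *: e j \in W j ->
    c t.+1 - b *: e j \in W j.
  move=> t j b tN H; rewrite cdef //.
  have -> : (c t + y t) *m M t - b *: e j =
     (c t + y t - b *: e j) *m M t + b *: (e j *m M t - e j).
    by rewrite mulmxBl -scalemxAl scalerBr addrA subrK.
  by rewrite memvD // ?memvZ // ?Wact // Wacte.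
elim=> [|j IH] s dvs sN cs.
  exists s; last exact: W0.
  by rewrite leqnn /= expn0 addn1.
have pj_gt0 : (0 < p ^ j)%N by rewrite expn_gt0 p_gt0.
have [a0 Ha0] := Wsplit _ _ cs.
have [k0 k0p Hk0] := chr a0.
have inner : forall k, (k < p)%N -> c (s + k * p ^ j)%N - (a0 + k%:R) *: e j \in W j ->
    forall r, (r < p ^ j)%N -> c (s + k * p ^ j + r)%N - (a0 + k%:R) *: e j \in W j.
  move=> k kp Hk; elim=> [|r IHr] rlt; first by rewrite addn0.
  have tN : ((s + k * p ^ j + r).+1 < N)%N.
    have : (k * p ^ j + p ^ j <= p ^ j.+1)%N.
      by rewrite expnS -mulSnr leq_mul2r kp orbT.
    move: sN; lia.
  have -> : (s + k * p ^ j + r.+1 = (s + k * p ^ j + r).+1)%N by lia.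
  apply: step => //.
  rewrite (ydef _ tN) -addrA (addrC (e _)) addrA memvD //.
    by apply: IHr; lia.
  apply: ein.
  have pos : (0 < (s + k * p ^ j + r).+1)%N by [].
  rewrite ltnNge -(pfactor_dvdn _ _ pos) // -addnS.
  rewrite dvdn_addr.
    by apply/negP => /dvdn_leq; move: rlt; lia.
  rewrite dvdn_add //; last by rewrite dvdn_mull.
  by apply: dvdn_trans dvs; rewrite dvdn_exp2l.
have blocks : forall k, (k < p)%N ->
    c (s + k * p ^ j)%N - (a0 + k%:R) *: e j \in W j.
  elim=> [|k IHk] kp; first by rewrite addn0 addr0.
  have kp' : (k < p)%N by lia.
  have ltpj : ((p ^ j).-1 < p ^ j)%N by rewrite ltn_predL.
  have H := inner k kp' (IHk kp') (p ^ j).-1 ltpj.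
  have tN : ((s + k * p ^ j + (p ^ j).-1).+1 < N)%N.
    have : (k.+1 * p ^ j + p ^ j <= p ^ j.+1)%N.
      by rewrite expnS -mulSnr leq_mul2r kp orbT.
    move: sN pj_gt0; lia.
  have eqt : ((s + k * p ^ j + (p ^ j).-1).+1 = s + k.+1 * p ^ j)%N.
    by rewrite mulSn; move: pj_gt0; lia.
  rewrite -eqt; apply: step => //.
  rewrite (ydef _ tN) eqt.
  have -> : logn p (s + k.+1 * p ^ j) = j.
    have pos : (0 < s + k.+1 * p ^ j)%N by rewrite ltn_addl // muln_gt0 pj_gt0.
    apply/eqP; rewrite eqn_leq -ltnS ltnNge -!(pfactor_dvdn _ _ pos) //.
    apply/andP; split.
      rewrite dvdn_addr //.
      rewrite expnS dvdn_pmul2r //; apply/negP => /(dvdn_leq (ltn0Sn k)); lia.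
    rewrite dvdn_add ?dvdn_mull //.
    by apply: dvdn_trans dvs; rewrite dvdn_exp2l.
  set c' := c _.
  have -> : c' + e j - (a0 + k.+1%:R) *: e j = c' - (a0 + k%:R) *: e j.
    by rewrite -natr1 addrA (scalerDl _ (a0 + k%:R)) scale1r opprD addrA addrAC addrK.
  exact: H.
have := blocks k0 k0p; rewrite Hk0 scale0r subr0 => Hc.
have bnd : (k0 * p ^ j + p ^ j <= p ^ j.+1)%N.
  by rewrite expnS -mulSnr leq_mul2r k0p orbT.
have H1 : (p ^ j %| s + k0 * p ^ j)%N.
  rewrite dvdn_add ?dvdn_mull //.
  by apply: dvdn_trans dvs; rewrite dvdn_exp2l.
have H2 : (s + k0 * p ^ j + p ^ j <= N)%N by move: sN bnd; lia.
have [t /andP [t1 t2] ct] := IH (s + k0 * p ^ j)%N H1 H2 Hc.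
exists t => //; apply/andP; split; first by move: t1; lia.
by move: t2 bnd; lia.
Qed.

Set Implicit Arguments.
Lemma nth_x (p n : nat) (x : 'I_n -> 'rV['F_p]_n) k (hk : (k < n)%N) :
  nth 0 (xseq x) k = x (Ordinal hk).
Proof.
rewrite /xseq (nth_map (Ordinal hk)) ?size_enum_ord //.
by congr x; apply: val_inj; rewrite /= nth_enum_ord.
Qed.

Lemma x_in_W (p n : nat) (x : 'I_n -> 'rV['F_p]_n) (k : 'I_n) j :
  (k < j)%N -> x k \in xspan_below x j.
Proof.
move=> kj; apply: memv_span; apply: map_f.
by rewrite mem_filter mem_enum andbT.
Qed.

Lemma W_mono (p n : nat) (x : 'I_n -> 'rV['F_p]_n) a b :
  (a <= b)%N -> (xspan_below x a <= xspan_below x b)%VS.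
Proof.
move=> ab; apply/span_subvP => u /mapP [k]; rewrite mem_filter => /andP [ka _] ->.
by apply: x_in_W; apply: leq_trans ab.
Qed.

Lemma W_0 (p n : nat) (x : 'I_n -> 'rV['F_p]_n) v :
  v \in xspan_below x 0 -> v = 0.
Proof.
have : (xspan_below x 0 <= 0)%VS.
  by apply/span_subvP => u /mapP [k]; rewrite mem_filter => /andP [].
by move=> /subvP H /H; rewrite memv0 => /eqP.
Qed.

Lemma e_in (p n : nat) (x : 'I_n -> 'rV['F_p]_n) k j :
  (k < j)%N -> nth 0 (xseq x) k \in xspan_below x j.
Proof.
move=> kj; case: (ltnP k n) => kn.
  by rewrite (nth_x _ x _ kn); apply: x_in_W.
by rewrite nth_default ?mem0v // size_map size_enum_ord.
Qed.

Lemma W_split (p n : nat) (x : 'I_n -> 'rV['F_p]_n) j v :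
  v \in xspan_below x j.+1 -> exists a, v - a *: nth 0 (xseq x) j \in xspan_below x j.
Proof.
have : (xspan_below x j.+1 <= xspan_below x j + <[(nth 0 (xseq x) j)%R]>)%VS.
  apply/span_subvP => u /mapP [k]; rewrite mem_filter => /andP [kj _] ->.
  rewrite ltnS leq_eqVlt in kj; case/orP: kj => [/eqP kj | kj].
    rewrite -kj (nth_x _ x _ (ltn_ord k)) -[x k]add0r.
    apply: memv_add; first exact: mem0v.
    suff -> : Ordinal (ltn_ord k) = k by apply: memv_line.
    exact: val_inj.
  rewrite -[x k]addr0; apply: memv_add; [exact: x_in_W | exact: mem0v].
move=> /subvP H /H /memv_addP [u Hu [w /vlineP [a ->] ->]].
by exists a; rewrite addrK.
Qed.

Lemma pactE n (R : nzRingType) (g : {perm 'I_n}) (v : 'rV[R]_n) :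
  pact g v = v *m perm_mx g.
Proof.
rewrite -[g in perm_mx g]invgK -col_permE.
by apply/rowP => i; rewrite !mxE.
Qed.

Lemma span_mul (K : fieldType) n (X : seq 'rV[K]_n) (U : {vspace 'rV[K]_n}) M v :
  {in X, forall u, u *m M \in U} -> v \in <<X>>%VS -> v *m M \in U.
Proof.
elim: X v => [|a X IH] v HX.
  by rewrite span_nil memv0 => /eqP ->; rewrite mul0mx mem0v.
rewrite span_cons => /memv_addP [u /vlineP [k ->] [w Hw ->]].
rewrite mulmxDl -scalemxAl memvD //; first by rewrite memvZ // HX // mem_head.
by apply: IH => // z zX; apply: HX; rewrite in_cons zX orbT.
Qed.

Lemma W_act (p n : nat) (x : 'I_n -> 'rV['F_p]_n) (G : {set {perm 'I_n}})
  (xflag : forall (j : 'I_n) (g : {perm 'I_n}), g \in G ->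
      x j - pact g (x j) \in xspan_below x j) g j v :
  g \in G -> v \in xspan_below x j -> v *m perm_mx g \in xspan_below x j.
Proof.
move=> gG; apply: span_mul => u /mapP [k]; rewrite mem_filter => /andP [kj _] ->.
rewrite -pactE -[pact g (x k)]opprK -[- pact g (x k)](addKr (x k)) opprD opprK.
rewrite memvB ?x_in_W //.
by apply: (subvP (@W_mono _ _ x _ _ (ltnW kj))); apply: xflag.
Qed.

Lemma W_acte (p n : nat) (x : 'I_n -> 'rV['F_p]_n) (G : {set {perm 'I_n}})
  (xflag : forall (j : 'I_n) (g : {perm 'I_n}), g \in G ->
      x j - pact g (x j) \in xspan_below x j) g j :
  g \in G -> nth 0 (xseq x) j *m perm_mx g - nth 0 (xseq x) j \in xspan_below x j.
Proof.
move=> gG; case: (ltnP j n) => jn.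
  rewrite (nth_x _ x _ jn) -pactE -opprB memvN.
  exact: (xflag (Ordinal jn)).
rewrite nth_default; last by rewrite size_map size_enum_ord.
have -> : (0 : 'rV['F_p]_n) *m perm_mx g = 0 by apply: mul0mx.
by rewrite subr0 mem0v.
Qed.

Lemma chrFp (p : nat) (pr_p : prime p) (a : 'F_p) : exists2 k, (k < p)%N & a + k%:R = 0.
Proof.
exists (val (- a)); last by rewrite natr_Zp subrr.
by apply: leq_trans (ltn_ord (- a)) _; rewrite Fp_cast.
Qed.

Theorem mainTheorem12 (p n : nat) (pr_p : prime p) (n_gt0 : (0 < n)%N)
  (S : {set {perm 'I_n}}) (S1 : (1%g : {perm 'I_n}) \in S)
  (x : 'I_n -> 'rV['F_p]_n)
  (xbasis : basis_of fullv (xseq x))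
  (xflag : forall (j : 'I_n) (g : {perm 'I_n}), g \in <<S>>%g ->
      x j - pact g (x j) \in xspan_below x j) :
  winning S (yseq p x).
Proof.
move=> c0 sig sigS.
set ys := yseq p x.
have sz : size ys = (p ^ n).-1 by rewrite size_map size_iota.
have pn_gt0 : (0 < p ^ n)%N by rewrite expn_gt0 prime_gt0.
have ltP : forall t, (t.+1 < p ^ n)%N -> (t < (p ^ n).-1)%N.
  by move=> t tN; rewrite -ltnS prednK.
have sigG : forall t, (t.+1 < p ^ n)%N -> sig t \in <<S>>%g.
  by move=> t tN; apply: mem_gen; apply: sigS; rewrite sz ltP.
have Wn : c0 \in xspan_below x n.
  move: xbasis => /andP [/eqP sp _].
  have : (fullv <= xspan_below x n)%VS.
    rewrite -sp; apply/span_subvP => u /mapP [k _ ->]; exact: x_in_W.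
  by move/subvP; apply; rewrite memvf.
have Wact : forall t j v, (t.+1 < p ^ n)%N -> v \in xspan_below x j ->
    v *m perm_mx (sig t) \in xspan_below x j.
  by move=> t j v tN; apply: (W_act x xflag j); apply: sigG.
have Wacte : forall t j, (t.+1 < p ^ n)%N ->
    nth 0 (xseq x) j *m perm_mx (sig t) - nth 0 (xseq x) j \in xspan_below x j.
  by move=> t j tN; apply: (W_acte x xflag j); apply: sigG.
have ydef : forall t, (t.+1 < p ^ n)%N -> nth 0 ys t = nth 0 (xseq x) (logn p t.+1).
  move=> t tN; rewrite /ys /yseq (nth_map 0%N) ?size_iota ?ltP //.
  by rewrite nth_iota ?ltP // add1n.
have cdef : forall t, (t.+1 < p ^ n)%N ->
    config ys sig c0 t.+1 = (config ys sig c0 t + nth 0 ys t) *m perm_mx (sig t).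
  by move=> t tN /=; rewrite pactE.
have [t /andP [_ tlt] ct] := @core _ _ p (p ^ n) (xspan_below x)
  (fun k => nth 0 (xseq x) k) (config ys sig c0) (fun t => nth 0 ys t)
  (fun t => perm_mx (sig t)) pr_p (@W_0 _ _ x) (@W_split _ _ x) Wact Wacte
  (@e_in _ _ x) ydef cdef (@chrFp p pr_p) n 0%N (dvdn0 _) (leqnn _) Wn.
by exists t => //; rewrite sz -ltnS prednK // -(add0n (p ^ n)).
Qed.
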